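(* For a Cartesian left additive category $\mathbb{X}$, the category $\mathcal{D}[\mathbb{X}]$ of $\mathsf{D}$-sequences (a subcategory of the category of pre-$\mathsf{D}$-sequences of $\mathbb{X}$, with the same identities, composition, pointwise finite product structure and pointwise additive structure) is a well-defined Cartesian left additive category.
   Context: Composition in diagrammatic order. A Cartesian left additive category is a category with finite products whose hom-sets are commutative monoids with $f(g+h)=fg+fh$, $f0=0$, in which all projections $\pi_j$ are additive ($(f+g)\pi_j=f\pi_j+g\pi_j$, $0\pi_j=0$). Let $\mathsf{P}(A)=A\times A$, $\mathsf{P}(f)=f\times f$. A pre-$\mathsf{D}$-sequence $f_\bullet:A\to B$ is $(f_0,f_1,\dots)$ with $f_n:\mathsf{P}^n(A)\to B$; $(h\cdot f_\bullet)_n=\mathsf{P}^n(h)f_n$; $\mathsf{T}(f_\bullet):\mathsf{P}(A)\to\mathsf{P}(B)$, $\mathsf{T}(f_\bullet)_n=\langle\mathsf{P}^n(\pi_0)f_n,f_{n+1}\rangle$; $\mathsf{D}[f_\bullet]:\mathsf{P}(A)\to B$, $\mathsf{D}[f_\bullet]_n=f_{n+1}$. Identity $i_\bullet$: $i_0=1$, $i_n=\pi_1\cdots\pi_1$ ($n$ times). Composition $(f_\bullet\ast g_\bullet)_n=\mathsf{T}^n(f_\bullet)_0g_n$. Products: terminal object of $\mathbb{X}$, projections $i_\bullet\cdot\pi_j$ where $(i_\bullet\cdot\pi_j)_n=i_n\pi_j$, pairing $\langle f_\bullet,g_\bullet\rangle_n=\langle f_n,g_n\rangle$. Addition: $0_n=0$,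 $(f_\bullet+g_\bullet)_n=f_n+g_n$. A $\mathsf{D}$-sequence is a pre-$\mathsf{D}$-sequence such that for all $n$, with $C=\mathsf{P}^n(A)$: $\langle1,0\rangle\cdot\mathsf{D}^{n+1}[f_\bullet]=0_\bullet$ ($\langle1,0\rangle:C\to C\times C$); $(1\times(\pi_0+\pi_1))\cdot\mathsf{D}^{n+1}[f_\bullet]=(1\times\pi_0)\cdot\mathsf{D}^{n+1}[f_\bullet]+(1\times\pi_1)\cdot\mathsf{D}^{n+1}[f_\bullet]$ (maps $C\times(C\times C)\to C\times C$); $\ell\cdot\mathsf{D}^{n+2}[f_\bullet]=\mathsf{D}^{n+1}[f_\bullet]$ with $\ell=\langle1,0\rangle\times\langle0,1\rangle:C\times C\to(C\times C)\times(C\times C)$; $c\cdot\mathsf{D}^{n+2}[f_\bullet]=\mathsf{D}^{n+2}[f_\bullet]$ with $c=\langle\langle\pi_0\pi_0,\pi_1\pi_0\rangle,\langle\pi_0\pi_1,\pi_1\pi_1\rangle\rangle$ on $(C\times C)\times(C\times C)$. *)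

(* Defs.v *)
(* Plain Rocq (no library needed).  Composition is written in DIAGRAMMATIC
   order: [comp o f g] means "first f, then g" (the paper's  f g). *)

Set Implicit Arguments.
Unset Strict Implicit.

(* structure on hom-sets.  The terminal object [top] and the binary    *)
(* product objects [prod A B] are parameters (so that D[X] can reuse   *)
(* those of X on the nose).                                            *)
Record CLACops (Ob : Type) (Hom : Ob -> Ob -> Type) (top : Ob)
    (prod : Ob -> Ob -> Ob) := {
  idm  : forall A, Hom A A;
  comp : forall A B C, Hom A B -> Hom B C -> Hom A C;
  p0   : forall A B, Hom (prod A B) A;
  p1   : forall A B, Hom (prod A B) B;
  pair : forall C A B, Hom C A -> Hom C B -> Hom C (prod A B);
  zero : forall A B, Hom A B;
  plus : forall A B, Hom A B -> Hom A B -> Hom A B }.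

Arguments idm  {Ob Hom top prod} o A : rename.
Arguments comp {Ob Hom top prod} o {A B C} f g : rename.
Arguments p0   {Ob Hom top prod} o {A B} : rename.
Arguments p1   {Ob Hom top prod} o {A B} : rename.
Arguments pair {Ob Hom top prod} o {C A B} f g : rename.
Arguments zero {Ob Hom top prod} o {A B} : rename.
Arguments plus {Ob Hom top prod} o {A B} f g : rename.

Record CLAClaws {Ob : Type} {Hom : Ob -> Ob -> Type} {top : Ob}
    {prod : Ob -> Ob -> Ob} (o : CLACops Hom top prod) : Prop := {
  law_id_l : forall A B (f : Hom A B), comp o (idm o A) f = f;
  law_id_r : forall A B (f : Hom A B), comp o f (idm o B) = f;
  law_assoc : forall A B C D (f : Hom A B) (g : Hom B C) (h : Hom C D),
      comp o (comp o f g) h = comp o f (comp o g h);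
  law_top_ex : forall A, inhabited (Hom A top);
  law_top_uniq : forall A (f g : Hom A top), f = g;
  law_pair_p0 : forall C A B (f : Hom C A) (g : Hom C B),
      comp o (pair o f g) (p0 o) = f;
  law_pair_p1 : forall C A B (f : Hom C A) (g : Hom C B),
      comp o (pair o f g) (p1 o) = g;
  law_pair_uniq : forall C A B (h : Hom C (prod A B)),
      h = pair o (comp o h (p0 o)) (comp o h (p1 o));
  law_plus_assoc : forall A B (f g h : Hom A B),
      plus o (plus o f g) h = plus o f (plus o g h);
  law_plus_comm : forall A B (f g : Hom A B), plus o f g = plus o g f;
  law_plus_zero : forall A B (f : Hom A B), plus o f (zero o) = f;
  law_left_add : forall A B C (f : Hom A B) (g h : Hom B C),
      comp o f (plus o g h) = plus o (comp o f g) (comp o f h);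
  law_left_zero : forall A B C (f : Hom A B),
      comp o f (zero o) = (zero o : Hom A C);
  law_p0_add : forall C A B (f g : Hom C (prod A B)),
      comp o (plus o f g) (p0 o) = plus o (comp o f (p0 o)) (comp o g (p0 o));
  law_p0_zero : forall C A B,
      comp o (zero o : Hom C (prod A B)) (p0 o) = zero o;
  law_p1_add : forall C A B (f g : Hom C (prod A B)),
      comp o (plus o f g) (p1 o) = plus o (comp o f (p1 o)) (comp o g (p1 o));
  law_p1_zero : forall C A B,
      comp o (zero o : Hom C (prod A B)) (p1 o) = zero o }.

Section PreD.
Context {Ob : Type} {Hom : Ob -> Ob -> Type} {top : Ob}
  {prod : Ob -> Ob -> Ob} (o : CLACops Hom top prod).

Definition tensor {A B C D} (f : Hom A B) (g : Hom C D)
  : Hom (prod A C) (prod B D) :=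
  pair o (comp o (p0 o) f) (comp o (p1 o) g).

Definition PO (A : Ob) : Ob := prod A A.
Definition Ph {A B} (f : Hom A B) : Hom (PO A) (PO B) := tensor f f.

Fixpoint Pn (n : nat) (A : Ob) : Ob :=
  match n with 0 => A | S m => Pn m (PO A) end.
Fixpoint Pnh (n : nat) {A B} (h : Hom A B) : Hom (Pn n A) (Pn n B) :=
  match n with 0 => h | S m => Pnh m (Ph h) end.
(* P^n, iterated "outside": P^{n+1}(A) = P(P^n(A)) (same object, by
   induction; used where the paper writes C = P^n(A) and P(C)). *)
Fixpoint PnO (n : nat) (A : Ob) : Ob :=
  match n with 0 => A | S m => PO (PnO m A) end.

Definition preD (A B : Ob) : Type := forall n : nat, Hom (Pn n A) B.

Definition act {A' A B} (h : Hom A' A) (f : preD A B) : preD A' B :=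
  fun n => comp o (Pnh n h) (f n).

Definition Tseq {A B} (f : preD A B) : preD (PO A) (PO B) :=
  fun n => pair o (comp o (Pnh n (p0 o)) (f n)) (f (S n)).

Definition Dseq {A B} (f : preD A B) : preD (PO A) B := fun n => f (S n).

Fixpoint Tn (n : nat) {A B} (f : preD A B) : preD (Pn n A) (Pn n B) :=
  match n with 0 => f | S m => Tn m (Tseq f) end.

Fixpoint Dn (n : nat) {A B} (f : preD A B) : preD (PnO n A) B :=
  match n with 0 => f | S m => Dseq (Dn m f) end.

Fixpoint iseq (n : nat) (A : Ob) : Hom (Pn n A) A :=
  match n with 0 => idm o A | S m => comp o (iseq m (PO A)) (p1 o) end.
Definition idseq (A : Ob) : preD A A := fun n => iseq n A.

Definition dcomp {A B C} (f : preD A B) (g : preD B C) : preD A C :=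
  fun n => comp o (Tn n f 0) (g n).

Definition proj0seq (A B : Ob) : preD (prod A B) A :=
  fun n => comp o (iseq n (prod A B)) (p0 o).
Definition proj1seq (A B : Ob) : preD (prod A B) B :=
  fun n => comp o (iseq n (prod A B)) (p1 o).
Definition pairseq {C A B} (f : preD C A) (g : preD C B) : preD C (prod A B) :=
  fun n => pair o (f n) (g n).
Definition zeroseq {A B} : preD A B := fun n => zero o.
Definition plusseq {A B} (f g : preD A B) : preD A B :=
  fun n => plus o (f n) (g n).

Definition isDseq {A B} (f : preD A B) : Prop :=
  forall n : nat,
    let C := PnO n A in
    act (pair o (idm o C) (zero o)) (Dn (S n) f) = zeroseq
 /\ act (tensor (idm o C) (plus o (p0 o) (p1 o))) (Dn (S n) f)
    = plusseq (act (tensor (idm o C) (p0 o)) (Dn (S n) f))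
              (act (tensor (idm o C) (p1 o)) (Dn (S n) f))
 /\ act (tensor (pair o (idm o C) (zero o)) (pair o (zero o) (idm o C)))
        (Dn (S (S n)) f) = Dn (S n) f
 /\ act (pair o (pair o (comp o (p0 o) (p0 o)) (comp o (p1 o) (p0 o)))
                (pair o (comp o (p0 o) (p1 o)) (comp o (p1 o) (p1 o))))
        (Dn (S (S n)) f) = Dn (S (S n)) f.

Definition DHom (A B : Ob) : Type := { f : preD A B | isDseq f }.

End PreD.

(* Main.v *)
Require Import Defs.
From Stdlib Require Import FunctionalExtensionality ProofIrrelevance.

Section S.
Context {Ob : Type} {Hom : Ob -> Ob -> Type} {top : Ob}
  {prod : Ob -> Ob -> Ob} (o : CLACops Hom top prod) (HX : CLAClaws o).

Local Notation "f ;; g" := (comp o f g) (at level 40, left associativity).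
Local Notation PD A B := (@preD Ob Hom prod A B).

Lemma assoc {A B C D} (f : Hom A B) (g : Hom B C) (h : Hom C D) : f;;g;;h = f;;(g;;h).
Proof. apply (law_assoc HX). Qed.
Lemma assocL {A B C D} (f : Hom A B) (g : Hom B C) (h : Hom C D) : f;;(g;;h) = f;;g;;h.
Proof. symmetry; apply (law_assoc HX). Qed.
Lemma idl {A B} (f : Hom A B) : idm o A ;; f = f. Proof. apply (law_id_l HX). Qed.
Lemma idr {A B} (f : Hom A B) : f ;; idm o B = f. Proof. apply (law_id_r HX). Qed.
Lemma pp0 {C A B} (f : Hom C A) (g : Hom C B) : pair o f g ;; p0 o = f. Proof. apply (law_pair_p0 HX). Qed.
Lemma pp1 {C A B} (f : Hom C A) (g : Hom C B) : pair o f g ;; p1 o = g. Proof. apply (law_pair_p1 HX). Qed.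
Lemma cz {A B C} (f : Hom A B) : f ;; zero o = (zero o : Hom A C). Proof. apply (law_left_zero HX). Qed.
Lemma cplus {A B C} (f : Hom A B) (g h : Hom B C) : f ;; plus o g h = plus o (f;;g) (f;;h).
Proof. apply (law_left_add HX). Qed.
Lemma zp0 {C A B} : (zero o : Hom C (prod A B)) ;; p0 o = zero o. Proof. apply (law_p0_zero HX). Qed.
Lemma zp1 {C A B} : (zero o : Hom C (prod A B)) ;; p1 o = zero o. Proof. apply (law_p1_zero HX). Qed.
Lemma ap0 {C A B} (f g : Hom C (prod A B)) : plus o f g ;; p0 o = plus o (f;;p0 o) (g;;p0 o).
Proof. apply (law_p0_add HX). Qed.
Lemma ap1 {C A B} (f g : Hom C (prod A B)) : plus o f g ;; p1 o = plus o (f;;p1 o) (g;;p1 o).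
Proof. apply (law_p1_add HX). Qed.

Lemma pair_ext {C A B} (f g : Hom C (prod A B)) : f;;p0 o = g;;p0 o -> f;;p1 o = g;;p1 o -> f = g.
Proof. intros H0 H1. rewrite (law_pair_uniq HX f), (law_pair_uniq HX g), H0, H1. reflexivity. Qed.
Lemma comp_pair {D C A B} (h : Hom D C) (f : Hom C A) (g : Hom C B) : h ;; pair o f g = pair o (h;;f) (h;;g).
Proof. apply pair_ext; rewrite ?assoc, ?pp0, ?pp1; reflexivity. Qed.
Lemma pair_eta {C A B} (f : Hom C (prod A B)) : pair o (f;;p0 o) (f;;p1 o) = f.
Proof. symmetry; apply (law_pair_uniq HX). Qed.
Lemma pair_zero {C A B} : pair o (zero o) (zero o) = (zero o : Hom C (prod A B)).
Proof. apply pair_ext; rewrite ?pp0, ?pp1, ?zp0, ?zp1; reflexivity. Qed.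
Lemma pair_plus {C A B} (a b : Hom C A) (c d : Hom C B) :
  pair o (plus o a b) (plus o c d) = plus o (pair o a c) (pair o b d).
Proof. apply pair_ext; rewrite ?pp0, ?pp1, ?ap0, ?ap1, ?pp0, ?pp1; reflexivity. Qed.
Lemma pair_p0p1 {A B} : pair o (p0 o) (p1 o) = idm o (prod A B).
Proof. apply pair_ext; rewrite ?pp0, ?pp1, ?idl; reflexivity. Qed.
Lemma plusA {A B} (f g h : Hom A B) : plus o (plus o f g) h = plus o f (plus o g h).
Proof. apply (law_plus_assoc HX). Qed.
Lemma plusC {A B} (f g : Hom A B) : plus o f g = plus o g f.
Proof. apply (law_plus_comm HX). Qed.
Lemma plus0 {A B} (f : Hom A B) : plus o f (zero o) = f.
Proof. apply (law_plus_zero HX). Qed.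

Ltac xs := unfold Ph, tensor, PO;
  repeat progress (rewrite ?idl, ?idr, ?assocL, ?comp_pair, ?pp0, ?pp1, ?cz, ?zp0, ?zp1, ?ap0, ?ap1, ?cplus, ?pair_p0p1).

Definition additive {A B} (k : Hom A B) : Prop :=
  (forall X, (zero o : Hom X A) ;; k = zero o) /\
  (forall X (a b : Hom X A), plus o a b ;; k = plus o (a;;k) (b;;k)).

Lemma add_id A : additive (idm o A).
Proof. split; intros; rewrite ?idr; reflexivity. Qed.
Lemma add_p0 A B : additive (p0 o : Hom (prod A B) A).
Proof. split; intros; [apply zp0|apply ap0]. Qed.
Lemma add_p1 A B : additive (p1 o : Hom (prod A B) B).
Proof. split; intros; [apply zp1|apply ap1]. Qed.
Lemma add_comp {A B C} (h : Hom A B) (k : Hom B C) : additive h -> additive k -> additive (h;;k).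
Proof. intros [h1 h2] [k1 k2]; split; intros; rewrite assocL, ?h1, ?k1, ?h2, ?k2, ?assoc; reflexivity. Qed.
Lemma add_pair {C A B} (h : Hom C A) (k : Hom C B) : additive h -> additive k -> additive (pair o h k).
Proof. intros [h1 h2] [k1 k2]; split; intros; rewrite comp_pair, ?h1, ?k1, ?h2, ?k2;
  [apply pair_zero| rewrite !(comp_pair _ h k); apply pair_plus]. Qed.
Lemma add_tensor {A B C D} (h : Hom A B) (k : Hom C D) : additive h -> additive k -> additive (tensor o h k).
Proof. intros. unfold tensor. apply add_pair; apply add_comp; auto using add_p0, add_p1. Qed.
Lemma add_Ph {A B} (h : Hom A B) : additive h -> additive (Ph o h).
Proof. intros; apply add_tensor; auto. Qed.

Lemma tp0 {A B C D} (h : Hom A B) (k : Hom C D) : tensor o h k ;; p0 o = p0 o ;; h.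
Proof. xs; reflexivity. Qed.
Lemma tp1 {A B C D} (h : Hom A B) (k : Hom C D) : tensor o h k ;; p1 o = p1 o ;; k.
Proof. xs; reflexivity. Qed.
Lemma Ph_comp {A B C} (h : Hom A B) (k : Hom B C) : Ph o (h;;k) = Ph o h ;; Ph o k.
Proof. unfold Ph, PO; apply pair_ext; xs; reflexivity. Qed.
Lemma Ph_id A : Ph o (idm o A) = idm o (PO A).
Proof. unfold Ph, PO; apply pair_ext; xs; reflexivity. Qed.
Lemma Ph_p0 {A B} (h : Hom A B) : Ph o h ;; p0 o = p0 o ;; h.
Proof. xs; reflexivity. Qed.
Lemma Ph_p1 {A B} (h : Hom A B) : Ph o h ;; p1 o = p1 o ;; h.
Proof. xs; reflexivity. Qed.
Lemma Pnh_comp n : forall {A B C} (h : Hom A B) (k : Hom B C), Pnh o n (h;;k) = Pnh o n h ;; Pnh o n k.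
Proof. induction n; intros; simpl; [reflexivity|]. rewrite Ph_comp; apply IHn. Qed.
Lemma Pnh_id n : forall A, Pnh o n (idm o A) = idm o (Pn n A).
Proof. induction n; intros; simpl; [reflexivity|]. rewrite Ph_id; apply IHn. Qed.
Lemma iseq_nat n : forall {A B} (h : Hom A B), Pnh o n h ;; iseq o n B = iseq o n A ;; h.
Proof. induction n; intros; simpl. rewrite idl, idr; reflexivity.
  rewrite assocL, IHn, !assoc, Ph_p1; reflexivity. Qed.
Lemma pair_tensor {X A B C D} (a : Hom X A) (b : Hom X B) (g : Hom A C) (g' : Hom B D) :
  pair o a b ;; tensor o g g' = pair o (a;;g) (b;;g').
Proof. xs; reflexivity. Qed.

Ltac fext x := apply functional_extensionality_dep; intro x.

Definition postcomp {A B C} (F : PD A B) (g : Hom B C) : PD A C :=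
  fun n => F n ;; g.

Lemma act_act {A'' A' A B} (h : Hom A'' A') (k : Hom A' A) (F : PD A B) :
  act o h (act o k F) = act o (h;;k) F.
Proof. fext n; unfold act; rewrite Pnh_comp, assoc; reflexivity. Qed.
Lemma act_id {A B} (F : PD A B) : act o (idm o A) F = F.
Proof. fext n; unfold act; rewrite Pnh_id, idl; reflexivity. Qed.
Lemma D_dcomp {A B C} (F : PD A B) (G : PD B C) :
  Dseq (dcomp o F G) = dcomp o (Tseq o F) (Dseq G).
Proof. reflexivity. Qed.
Lemma D_act {A' A B} (h : Hom A' A) (F : PD A B) : Dseq (act o h F) = act o (Ph o h) (Dseq F).
Proof. reflexivity. Qed.
Lemma D_pair {C A B} (F : PD C A) (G : PD C B) : Dseq (pairseq o F G) = pairseq o (Dseq F) (Dseq G).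
Proof. reflexivity. Qed.
Lemma D_plus {A B} (F G : PD A B) : Dseq (plusseq o F G) = plusseq o (Dseq F) (Dseq G).
Proof. reflexivity. Qed.
Lemma D_zero {A B} : Dseq (zeroseq o : PD A B) = zeroseq o.
Proof. reflexivity. Qed.
Lemma T_def {A B} (F : PD A B) : Tseq o F = pairseq o (act o (p0 o) F) (Dseq F).
Proof. reflexivity. Qed.
Lemma D_postcomp {A B C} (F : PD A B) (g : Hom B C) : Dseq (postcomp F g) = postcomp (Dseq F) g.
Proof. reflexivity. Qed.
Lemma act_pair {A' C A B} (h : Hom A' C) (F : PD C A) (G : PD C B) :
  act o h (pairseq o F G) = pairseq o (act o h F) (act o h G).
Proof. fext n; unfold act, pairseq; apply comp_pair. Qed.
Lemma act_plus {A' A B} (h : Hom A' A) (F G : PD A B) :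
  act o h (plusseq o F G) = plusseq o (act o h F) (act o h G).
Proof. fext n; unfold act, plusseq; apply cplus. Qed.
Lemma act_zero {A' A B} (h : Hom A' A) : act o h (zeroseq o : PD A B) = zeroseq o.
Proof. fext n; unfold act, zeroseq; apply cz. Qed.
Lemma act_postcomp {A' A B C} (h : Hom A' A) (F : PD A B) (g : Hom B C) :
  act o h (postcomp F g) = postcomp (act o h F) g.
Proof. fext n; unfold act, postcomp; apply assocL. Qed.

Lemma T_act {A' A B} (h : Hom A' A) (F : PD A B) : Tseq o (act o h F) = act o (Ph o h) (Tseq o F).
Proof. fext n; unfold Tseq, act. etransitivity; [|symmetry; apply comp_pair]. f_equal.
  unfold Ph, PO in *. rewrite !assocL, <- !Pnh_comp, tp0; reflexivity. Qed.
Lemma Tn_act n : forall {A' A B} (h : Hom A' A) (F : PD A B),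
  Tn o n (act o h F) = act o (Pnh o n h) (Tn o n F).
Proof. induction n; intros; simpl; [reflexivity|]. rewrite T_act; apply IHn. Qed.
Lemma act_dcomp {A' A B C} (h : Hom A' A) (F : PD A B) (G : PD B C) :
  act o h (dcomp o F G) = dcomp o (act o h F) G.
Proof. fext n; unfold dcomp. rewrite Tn_act. unfold act; simpl. apply assocL. Qed.

Lemma T_postcomp {A B C} (F : PD A B) (g : Hom B C) : Tseq o (postcomp F g) = postcomp (Tseq o F) (Ph o g).
Proof. fext n; unfold Tseq, postcomp. unfold Ph, PO in *. rewrite pair_tensor, !assoc; reflexivity. Qed.
Lemma Tn_postcomp n : forall {A B C} (F : PD A B) (g : Hom B C),
  Tn o n (postcomp F g) = postcomp (Tn o n F) (Pnh o n g).
Proof. induction n; intros; simpl; [reflexivity|]. rewrite T_postcomp; apply IHn. Qed.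
Lemma dcomp_postcomp_l {A B B' C} (F : PD A B) (g : Hom B B') (G : PD B' C) :
  dcomp o (postcomp F g) G = dcomp o F (act o g G).
Proof. fext n; unfold dcomp. rewrite Tn_postcomp. unfold postcomp, act. apply assoc. Qed.
Lemma dcomp_zero {A B C} (F : PD A B) : dcomp o F (zeroseq o : PD B C) = zeroseq o.
Proof. fext n; unfold dcomp, zeroseq; apply cz. Qed.
Lemma dcomp_plus {A B C} (F : PD A B) (G H : PD B C) :
  dcomp o F (plusseq o G H) = plusseq o (dcomp o F G) (dcomp o F H).
Proof. fext n; unfold dcomp, plusseq; apply cplus. Qed.

Definition natr {A' A B' B} (F : PD A B) (G : PD A' B') (h : Hom A' A) (g : Hom B' B) :=
  forall k, Pnh o k h ;; F k = G k ;; g.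
Lemma natr_T {A' A B' B} (F : PD A B) (G : PD A' B') h g :
  natr F G h g -> natr (Tseq o F) (Tseq o G) (Ph o h) (Ph o g).
Proof. intros H k. unfold Tseq, Ph, PO in *. rewrite comp_pair, pair_tensor. f_equal.
  - rewrite assocL, <- Pnh_comp, tp0, Pnh_comp, assoc, H, assocL; reflexivity.
  - apply (H (S k)). Qed.
Lemma natr_Tn n : forall {A' A B' B} (F : PD A B) (G : PD A' B') h g,
  natr F G h g -> natr (Tn o n F) (Tn o n G) (Pnh o n h) (Pnh o n g).
Proof. induction n; intros; simpl; [assumption|]. apply IHn, natr_T, H. Qed.
Lemma T_at {A B} (F : PD A B) n : Tseq o F n = pair o (Pnh o n (p0 o) ;; F n) (F (S n)).
Proof. reflexivity. Qed.
Lemma T_dcomp {A B C} (F : PD A B) (G : PD B C) :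
  Tseq o (dcomp o F G) = dcomp o (Tseq o F) (Tseq o G).
Proof. fext n; unfold dcomp. rewrite !T_at. unfold PO in *. rewrite comp_pair. f_equal.
  assert (E := natr_Tn n F (Tseq o F) (p0 o) (p0 o) (fun k => eq_sym (pp0 _ _))).
  specialize (E 0). simpl in E. unfold PO in *. rewrite assocL, E, assoc. reflexivity. Qed.
Lemma Tn_dcomp n : forall {A B C} (F : PD A B) (G : PD B C),
  Tn o n (dcomp o F G) = dcomp o (Tn o n F) (Tn o n G).
Proof. induction n; intros; simpl; [reflexivity|]. rewrite T_dcomp; apply IHn. Qed.
Lemma Tn_iseq n : forall {A B} (F : PD A B), Tn o n F 0 ;; iseq o n B = F n.
Proof. induction n; intros; simpl. apply idr. rewrite assocL.
  assert (E := IHn _ _ (Tseq o F)). simpl in E. unfold PO in *. rewrite E. apply pp1. Qed.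
Lemma T_idseq A : Tseq o (idseq o A) = idseq o (PO A).
Proof. fext n; unfold Tseq, idseq. rewrite iseq_nat. simpl. rewrite <- comp_pair.
  unfold PO. rewrite pair_p0p1, idr. reflexivity. Qed.
Lemma Tn_idseq n : forall A, Tn o n (idseq o A) = idseq o (Pn n A).
Proof. induction n; intros; simpl; [reflexivity|]. rewrite T_idseq; apply IHn. Qed.


Local Notation e10 C := (pair o (idm o C) (zero o) : Hom C (prod C C)).
Local Notation e01 C := (pair o (zero o) (idm o C) : Hom C (prod C C)).
Local Notation ll C := (tensor o (pair o (idm o C) (zero o)) (pair o (zero o) (idm o C)) : Hom (prod C C) (prod (prod C C) (prod C C))).
Local Notation cc C := (pair o (pair o (comp o (p0 o) (p0 o)) (comp o (p1 o) (p0 o)))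
                (pair o (comp o (p0 o) (p1 o)) (comp o (p1 o) (p1 o))) :
     Hom (prod (prod C C) (prod C C)) (prod (prod C C) (prod C C))).
Local Notation ss C := (tensor o (idm o C) (plus o (p0 o) (p1 o)) : Hom (prod C (prod C C)) (prod C C)).
Local Notation s0 C := (tensor o (idm o C) (p0 o) : Hom (prod C (prod C C)) (prod C C)).
Local Notation s1 C := (tensor o (idm o C) (p1 o) : Hom (prod C (prod C C)) (prod C C)).

Definition Phi {C B} (F : PD C B) : Prop :=
  act o (pair o (idm o C) (zero o)) (Dseq F) = zeroseq o
  /\ act o (tensor o (idm o C) (plus o (p0 o) (p1 o))) (Dseq F)
     = plusseq o (act o (tensor o (idm o C) (p0 o)) (Dseq F))
                 (act o (tensor o (idm o C) (p1 o)) (Dseq F))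
  /\ act o (tensor o (pair o (idm o C) (zero o)) (pair o (zero o) (idm o C)))
        (Dseq (Dseq F)) = Dseq F
  /\ act o (pair o (pair o (comp o (p0 o) (p0 o)) (comp o (p1 o) (p0 o)))
                (pair o (comp o (p0 o) (p1 o)) (comp o (p1 o) (p1 o))))
        (Dseq (Dseq F)) = Dseq (Dseq F).

Lemma isD_Phi {A B} (f : PD A B) : isDseq o f <-> (forall n, Phi (Dn n f)).
Proof. split; intros H n; exact (H n). Qed.


Lemma plus_swap {A B} (a b c d : Hom A B) :
  plus o (plus o a b) (plus o c d) = plus o (plus o a c) (plus o b d).
Proof. rewrite !plusA. f_equal. rewrite <- !plusA. f_equal. apply plusC. Qed.

Lemma Phi_zero {C B} : Phi (zeroseq o : PD C B).
Proof. unfold Phi. rewrite !D_zero, !act_zero. repeat split.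
  fext n; unfold plusseq, zeroseq; rewrite plus0; reflexivity. Qed.

Lemma Phi_plus {C B} (F G : PD C B) : Phi F -> Phi G -> Phi (plusseq o F G).
Proof. intros [F1 [F2 [F3 F4]]] [G1 [G2 [G3 G4]]]. unfold Phi.
  rewrite !D_plus, !act_plus, F1, F2, F3, F4, G1, G2, G3, G4. repeat split.
  - fext n; unfold plusseq, zeroseq; rewrite plus0; reflexivity.
  - fext n; unfold plusseq; apply plus_swap. Qed.

Lemma Phi_pair {C A B} (F : PD C A) (G : PD C B) : Phi F -> Phi G -> Phi (pairseq o F G).
Proof. intros [F1 [F2 [F3 F4]]] [G1 [G2 [G3 G4]]]. unfold Phi.
  rewrite !D_pair, !act_pair, F1, F2, F3, F4, G1, G2, G3, G4. repeat split.
  - fext n; unfold pairseq, zeroseq; apply pair_zero.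
  - fext n; unfold plusseq, pairseq; apply pair_plus. Qed.


Ltac xs2 := xs; repeat progress (rewrite ?pair_eta, ?Pnh_id, ?idl, <- ?Pnh_comp; xs).

Lemma Phi_act {C' C B} (k : Hom C' C) (H : PD C B) : additive k -> Phi H -> Phi (act o k H).
Proof. intros [Hk0 Hk1] [H1 [H2 [H3 H4]]]. unfold Phi. rewrite !D_act, !act_act.
  assert (E1 : e10 C' ;; Ph o k = k ;; e10 C).
  { unfold Ph, PO. apply pair_ext; xs; rewrite ?Hk0; reflexivity. }
  assert (E2 : ss C' ;; Ph o k = tensor o k (Ph o k) ;; ss C).
  { unfold Ph, PO. apply pair_ext; xs; rewrite ?Hk1; xs; reflexivity. }
  assert (E3 : s0 C' ;; Ph o k = tensor o k (Ph o k) ;; s0 C).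
  { unfold Ph, PO. apply pair_ext; xs; reflexivity. }
  assert (E4 : s1 C' ;; Ph o k = tensor o k (Ph o k) ;; s1 C).
  { unfold Ph, PO. apply pair_ext; xs; reflexivity. }
  assert (E5 : ll C' ;; Ph o (Ph o k) = Ph o k ;; ll C).
  { unfold Ph, PO. apply pair_ext; (apply pair_ext; xs; rewrite ?Hk0; reflexivity). }
  assert (E6 : cc C' ;; Ph o (Ph o k) = Ph o (Ph o k) ;; cc C).
  { unfold Ph, PO. apply pair_ext; (apply pair_ext; xs; reflexivity). }
  unfold PO in *.
  rewrite E1, E2, E3, E4, E5, E6, <- !act_act, H1, H2, H3, H4, act_zero, act_plus.
  repeat split; reflexivity. Qed.

Lemma D_inj {A B} (g : Hom A B) :
  Dseq (postcomp (idseq o A) g) = postcomp (idseq o (PO A)) (p1 o ;; g).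
Proof. fext n. unfold postcomp, idseq, Dseq. simpl. apply assoc. Qed.
Lemma act_inj {A' A B} (h : Hom A' A) (g : Hom A B) :
  act o h (postcomp (idseq o A) g) = postcomp (idseq o A') (h ;; g).
Proof. fext n. unfold act, postcomp, idseq. rewrite assocL, iseq_nat, assoc. reflexivity. Qed.

Lemma Phi_inj {A B} (g : Hom A B) : additive g -> Phi (postcomp (idseq o A) g).
Proof. intros [Hg0 Hg1]. unfold Phi. rewrite !D_inj, !act_inj. repeat split.
  - fext n. unfold postcomp, zeroseq. xs. rewrite Hg0; xs; reflexivity.
  - fext n. unfold postcomp, plusseq. xs. rewrite Hg1; xs; reflexivity.
  - fext n. unfold postcomp. xs; reflexivity.
  - fext n. unfold postcomp. xs; reflexivity. Qed.


Lemma Phi_comp {C E Z} (F : PD C E) (G : PD E Z) : Phi F -> Phi G -> Phi (dcomp o F G).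
Proof. intros [F1 [F2 [F3 F4]]] [G1 [G2 [G3 G4]]]. unfold Phi. rewrite !D_dcomp, !act_dcomp.
  split; [|split; [|split]].
  - assert (K : act o (e10 C) (Tseq o F) = postcomp F (e10 E)).
    { rewrite T_def. unfold PO in *. rewrite act_pair, act_act, F1. fext n. unfold pairseq, act, postcomp, zeroseq.
      unfold PO in *. xs2. reflexivity. }
    rewrite K, dcomp_postcomp_l. unfold PO in *. rewrite G1, dcomp_zero. reflexivity.
  - set (W := pairseq o (act o (p0 o) F) (pairseq o (act o (s0 C) (Dseq F)) (act o (s1 C) (Dseq F)))).
    assert (K : act o (ss C) (Tseq o F) = postcomp W (ss E)).
    { rewrite T_def. unfold PO in *. rewrite act_pair, act_act, F2. subst W. fext n. unfold pairseq, act, postcomp, plusseq.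
      unfold PO in *. xs2. reflexivity. }
    assert (Ka : act o (s0 C) (Tseq o F) = postcomp W (s0 E)).
    { rewrite T_def. unfold PO in *. rewrite act_pair, act_act. subst W. fext n. unfold pairseq, act, postcomp.
      unfold PO in *. xs2. reflexivity. }
    assert (Kb : act o (s1 C) (Tseq o F) = postcomp W (s1 E)).
    { rewrite T_def. unfold PO in *. rewrite act_pair, act_act. subst W. fext n. unfold pairseq, act, postcomp.
      unfold PO in *. xs2. reflexivity. }
    rewrite K, dcomp_postcomp_l. unfold PO in *. rewrite G2, dcomp_plus, Ka, Kb, !dcomp_postcomp_l. reflexivity.
  - assert (K : act o (ll C) (Tseq o (Tseq o F)) = postcomp (Tseq o F) (ll E)).
    { rewrite (T_def (Tseq o F)), !T_def. unfold PO in *. rewrite D_pair. unfold PO in *. rewrite D_act. unfold PO in *. rewrite !act_pair, !act_act, F3.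
      assert (Z1 : ll C ;; p0 o = p0 o ;; e10 C).
      { unfold PO; xs; reflexivity. }
      assert (Z2 : ll C ;; Ph o (p0 o) = p0 o ;; e10 C).
      { unfold Ph, PO; apply pair_ext; xs; reflexivity. }
      unfold PO in *. rewrite Z1, Z2, <- !act_act, F1, !act_zero.
      fext n. unfold pairseq, act, postcomp, zeroseq. xs2. reflexivity. }
    rewrite K, dcomp_postcomp_l. unfold PO in *. rewrite G3. reflexivity.
  - assert (K : act o (cc C) (Tseq o (Tseq o F)) = postcomp (Tseq o (Tseq o F)) (cc E)).
    { rewrite (T_def (Tseq o F)), !T_def. unfold PO in *. rewrite D_pair. unfold PO in *. rewrite D_act. unfold PO in *. rewrite !act_pair, !act_act, F4.
      fext n. unfold pairseq, act, postcomp. unfold PO in *. xs2. reflexivity. }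
    rewrite K, dcomp_postcomp_l. unfold PO in *. rewrite G4. reflexivity.
Qed.



Fixpoint DnI (m : nat) {A B} (f : PD A B) : PD (Pn m A) B :=
  match m with 0 => f | S k => DnI k (Dseq f) end.
Definition GoodI {C E} (F : PD C E) := forall m, Phi (DnI m F).

Lemma GoodI_pairD m : forall {C E} (F : PD C E) (k : Hom (PO C) C),
  GoodI F -> additive k -> Phi (DnI m (pairseq o (act o k F) (Dseq F))).
Proof. induction m; intros C E F k HF Hk; simpl.
  - apply Phi_pair; [apply Phi_act; [exact Hk|apply (HF 0)]|apply (HF 1)].
  - rewrite D_pair, D_act. apply IHm; [|apply add_Ph, Hk]. intro j; apply (HF (S j)). Qed.
Lemma GoodI_T {C E} (F : PD C E) : GoodI F -> GoodI (Tseq o F).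
Proof. intros HF m. rewrite T_def. apply GoodI_pairD; [exact HF|apply add_p0]. Qed.
Lemma GoodI_comp m : forall {A B C} (F : PD A B) (G : PD B C),
  GoodI F -> GoodI G -> Phi (DnI m (dcomp o F G)).
Proof. induction m; intros A B C F G HF HG; simpl.
  - apply Phi_comp; [apply (HF 0)|apply (HG 0)].
  - rewrite D_dcomp. apply IHm; [apply GoodI_T, HF| intro j; apply (HG (S j))]. Qed.
Lemma GoodI_zero m : forall {A B}, Phi (DnI m (zeroseq o : PD A B)).
Proof. induction m; intros; simpl; [apply Phi_zero| apply IHm]. Qed.
Lemma GoodI_plus m : forall {A B} (F G : PD A B), GoodI F -> GoodI G -> Phi (DnI m (plusseq o F G)).
Proof. induction m; intros A B F G HF HG; simpl.
  - apply Phi_plus; [apply (HF 0)|apply (HG 0)].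
  - apply IHm; intro j; [apply (HF (S j))|apply (HG (S j))]. Qed.
Lemma GoodI_pair m : forall {C A B} (F : PD C A) (G : PD C B), GoodI F -> GoodI G -> Phi (DnI m (pairseq o F G)).
Proof. induction m; intros C A B F G HF HG; simpl.
  - apply Phi_pair; [apply (HF 0)|apply (HG 0)].
  - apply IHm; intro j; [apply (HF (S j))|apply (HG (S j))]. Qed.
Lemma GoodI_inj m : forall {A B} (g : Hom A B), additive g -> Phi (DnI m (postcomp (idseq o A) g)).
Proof. induction m; intros A B g Hg; simpl.
  - apply Phi_inj, Hg.
  - rewrite D_inj. apply IHm. apply add_comp; [apply add_p1|exact Hg]. Qed.

Definition cast {X Y B} (e : X = Y) (F : PD X B) : PD Y B := eq_rect X (fun Z => PD Z B) F Y e.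
Lemma Dseq_cast {X Y B} (e : X = Y) (F : PD X B) : Dseq (cast e F) = cast (f_equal PO e) (Dseq F).
Proof. destruct e; reflexivity. Qed.
Lemma cast_cast {X Y Z B} (e : X = Y) (e' : Y = Z) (F : PD X B) : cast e' (cast e F) = cast (eq_trans e e') F.
Proof. destruct e, e'; reflexivity. Qed.
Lemma Phi_cast {X Y B} (e : X = Y) (F : PD X B) : Phi (cast e F) <-> Phi F.
Proof. destruct e; split; auto. Qed.

Lemma Dn_comm m : forall {C B} (F : PD C B), exists e : PnO m (PO C) = PO (PnO m C),
  Dseq (Dn m F) = cast e (Dn m (Dseq F)).
Proof. induction m; intros C B F.
  - exists eq_refl. reflexivity.
  - destruct (IHm C B F) as [e E]. exists (f_equal PO e). simpl. rewrite E, Dseq_cast. reflexivity. Qed.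
Lemma Dn_DnI m : forall {C B} (F : PD C B), exists e : Pn m C = PnO m C, Dn m F = cast e (DnI m F).
Proof. induction m; intros C B F.
  - exists eq_refl. reflexivity.
  - destruct (IHm _ _ (Dseq F)) as [e1 E1]. destruct (Dn_comm m F) as [e3 E3].
    exists (eq_trans e1 e3). simpl. rewrite E3, E1, cast_cast. reflexivity. Qed.
Lemma isD_GoodI {A B} (f : PD A B) : isDseq o f <-> GoodI f.
Proof. split.
  - intros H m. destruct (Dn_DnI m f) as [e E]. apply (Phi_cast e). rewrite <- E. apply (proj1 (isD_Phi f) H).
  - intros H. apply isD_Phi. intro m. destruct (Dn_DnI m f) as [e E]. rewrite E. apply Phi_cast. apply H.
Qed.

Lemma isD_dcomp {A B C} (f : PD A B) (g : PD B C) : isDseq o f -> isDseq o g -> isDseq o (dcomp o f g).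
Proof. intros Hf Hg. apply isD_GoodI in Hf. apply isD_GoodI in Hg. apply isD_GoodI. intro m. apply GoodI_comp; assumption. Qed.
Lemma isD_zero {A B} : isDseq o (zeroseq o : PD A B).
Proof. apply isD_GoodI; intro m; apply GoodI_zero. Qed.
Lemma isD_plus {A B} (f g : PD A B) : isDseq o f -> isDseq o g -> isDseq o (plusseq o f g).
Proof. intros Hf Hg. apply isD_GoodI in Hf. apply isD_GoodI in Hg. apply isD_GoodI. intro m. apply GoodI_plus; assumption. Qed.
Lemma isD_pair {C A B} (f : PD C A) (g : PD C B) : isDseq o f -> isDseq o g -> isDseq o (pairseq o f g).
Proof. intros Hf Hg. apply isD_GoodI in Hf. apply isD_GoodI in Hg. apply isD_GoodI. intro m. apply GoodI_pair; assumption. Qed.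
Lemma isD_inj {A B} (g : Hom A B) : additive g -> isDseq o (postcomp (idseq o A) g).
Proof. intros Hg. apply isD_GoodI; intro m. apply GoodI_inj, Hg. Qed.
Lemma isD_id A : isDseq o (idseq o A).
Proof. assert (E : postcomp (idseq o A) (idm o A) = idseq o A).
  { fext n. unfold postcomp. apply idr. }
  rewrite <- E. apply isD_inj, add_id. Qed.
Lemma isD_proj0 A B : isDseq o (proj0seq o A B).
Proof. exact (isD_inj (p0 o) (add_p0 A B)). Qed.
Lemma isD_proj1 A B : isDseq o (proj1seq o A B).
Proof. exact (isD_inj (p1 o) (add_p1 A B)). Qed.


Lemma dcomp_id_l {A B} (f : PD A B) : dcomp o (idseq o A) f = f.
Proof. fext n. unfold dcomp. rewrite Tn_idseq. apply idl. Qed.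
Lemma dcomp_id_r {A B} (f : PD A B) : dcomp o f (idseq o B) = f.
Proof. fext n. unfold dcomp. apply Tn_iseq. Qed.
Lemma dcomp_assoc {A B C D} (f : PD A B) (g : PD B C) (h : PD C D) :
  dcomp o (dcomp o f g) h = dcomp o f (dcomp o g h).
Proof. fext n. unfold dcomp at 1 3 4. rewrite Tn_dcomp. apply assoc. Qed.
Lemma dcomp_proj_pre {C A B} (f : PD C (prod A B)) n :
  Tn o n f 0 ;; (iseq o n (prod A B) ;; p0 o) = f n ;; p0 o /\
  Tn o n f 0 ;; (iseq o n (prod A B) ;; p1 o) = f n ;; p1 o.
Proof. assert (E := Tn_iseq n f). rewrite !assocL, E. split; reflexivity. Qed.

Lemma sig_ext {A B} (f g : DHom o A B) : proj1_sig f = proj1_sig g -> f = g.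
Proof. destruct f as [f Hf], g as [g Hg]; simpl; intros E; subst g. f_equal. apply proof_irrelevance. Qed.

Definition Dops : CLACops (DHom o) top prod := {|
  idm := fun A => exist _ (idseq o A) (isD_id A);
  comp := fun A B C f g => exist _ (dcomp o (proj1_sig f) (proj1_sig g))
            (isD_dcomp _ _ (proj2_sig f) (proj2_sig g));
  p0 := fun A B => exist _ (proj0seq o A B) (isD_proj0 A B);
  p1 := fun A B => exist _ (proj1seq o A B) (isD_proj1 A B);
  pair := fun C A B f g => exist _ (pairseq o (proj1_sig f) (proj1_sig g))
            (isD_pair _ _ (proj2_sig f) (proj2_sig g));
  zero := fun A B => exist _ (zeroseq o) isD_zero;
  plus := fun A B f g => exist _ (plusseq o (proj1_sig f) (proj1_sig g))
            (isD_plus _ _ (proj2_sig f) (proj2_sig g)) |}.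

Lemma Dlaws : CLAClaws Dops.
Proof. constructor; intros.
  - apply sig_ext; simpl. apply dcomp_id_l.
  - apply sig_ext; simpl. apply dcomp_id_r.
  - apply sig_ext; simpl. apply dcomp_assoc.
  - constructor. exact (zero Dops).
  - apply sig_ext. fext n. apply (law_top_uniq HX).
  - apply sig_ext; simpl. fext n. unfold dcomp, proj0seq. rewrite (proj1 (dcomp_proj_pre _ n)). apply pp0.
  - apply sig_ext; simpl. fext n. unfold dcomp, proj1seq. rewrite (proj2 (dcomp_proj_pre _ n)). apply pp1.
  - apply sig_ext; simpl. fext n. unfold pairseq, dcomp, proj0seq, proj1seq.
    rewrite (proj1 (dcomp_proj_pre _ n)), (proj2 (dcomp_proj_pre _ n)). symmetry; apply pair_eta.
  - apply sig_ext; simpl. fext n. unfold plusseq. apply plusA.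
  - apply sig_ext; simpl. fext n. unfold plusseq. apply plusC.
  - apply sig_ext; simpl. fext n. unfold plusseq, zeroseq. apply plus0.
  - apply sig_ext; simpl. apply dcomp_plus.
  - apply sig_ext; simpl. apply dcomp_zero.
  - apply sig_ext; simpl. fext n. unfold dcomp, proj0seq, plusseq.
    rewrite !(proj1 (dcomp_proj_pre _ n)). apply ap0.
  - apply sig_ext; simpl. fext n. unfold dcomp, proj0seq, zeroseq.
    rewrite !(proj1 (dcomp_proj_pre _ n)). apply zp0.
  - apply sig_ext; simpl. fext n. unfold dcomp, proj1seq, plusseq.
    rewrite !(proj2 (dcomp_proj_pre _ n)). apply ap1.
  - apply sig_ext; simpl. fext n. unfold dcomp, proj1seq, zeroseq.
    rewrite !(proj2 (dcomp_proj_pre _ n)). apply zp1.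
Qed.

End S.

Theorem proposition4p7 (Ob : Type) (Hom : Ob -> Ob -> Type) (top : Ob)
    (prod : Ob -> Ob -> Ob) (o : CLACops Hom top prod) (HX : CLAClaws o) :
  exists o' : CLACops (DHom o) top prod,
    CLAClaws o'
    /\ (forall A, proj1_sig (idm o' A) = idseq o A)
    /\ (forall A B C (f : DHom o A B) (g : DHom o B C),
          proj1_sig (comp o' f g) = dcomp o (proj1_sig f) (proj1_sig g))
    /\ (forall A B, proj1_sig (p0 o' : DHom o (prod A B) A) = proj0seq o A B)
    /\ (forall A B, proj1_sig (p1 o' : DHom o (prod A B) B) = proj1seq o A B)
    /\ (forall C A B (f : DHom o C A) (g : DHom o C B),
          proj1_sig (pair o' f g) = pairseq o (proj1_sig f) (proj1_sig g))
    /\ (forall A B, proj1_sig (zero o' : DHom o A B) = zeroseq o)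
    /\ (forall A B (f g : DHom o A B),
          proj1_sig (plus o' f g) = plusseq o (proj1_sig f) (proj1_sig g)).
Proof.
  exists (Dops o HX). split; [apply Dlaws|].
  repeat split; intros; reflexivity.
Qed.
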